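(* Let $h:\mathbb{R}^n\to(-\infty,+\infty]$ be a proper lower semicontinuous convex function whose domain $\mathrm{dom}\,h$ is closed and bounded, let $\Omega\subseteq\mathbb{R}^n$ be a closed convex set with $\mathrm{dom}\,h\subseteq\Omega$, and let $D_h := \sup_{u_1,u_2\in\mathrm{dom}\,h}\|u_1-u_2\|$. Let $A_0=12$, $a_{k-1} = \frac{1+\sqrt{1+4A_{k-1}}}{2}$ and $A_k = A_{k-1}+a_{k-1}$ for $k\ge1$. Let $\lambda_0>0$ and $\bar\xi\ge 0$. Let $\{y_k\}_{k\ge0}\subseteq \mathrm{dom}\,h$, let $\{\lambda_k\}_{k\ge1}$ satisfy $0<\lambda_k\le\lambda_0$, let $\{\xi_k\}_{k\ge1}$ satisfy $0\le\xi_k\le\bar\xi$, and set $\tau_k = 2\xi_k\lambda_k/a_{k-1}$ for $k\ge1$. Let $x_0 = y_0$ and, for $k\ge1$, $$x_k = P_\Omega\!\left(\frac{(1+\tau_k)A_k}{a_{k-1}(\tau_k a_{k-1}+1)}\,y_k - \frac{A_{k-1}}{a_{k-1}(\tau_k a_{k-1}+1)}\,y_{k-1}\right),$$ where $P_\Omega$ denotes the Euclidean projection onto $\Omega$. Then for every $k\ge 0$, $$\|x_k - x_0\| \le C k, \qquad C := 2(2+\bar\xi\lambda_0)D_h.$$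
   Context: $\|\cdot\|$ is the Euclidean norm on $\mathbb{R}^n$. $\mathrm{dom}\,h=\{u: h(u)<+\infty\}$. *)

(* Defs.v *)
From HB Require Import structures.
From mathcomp Require Import all_boot all_order all_algebra.
From mathcomp Require Import all_classical all_reals all_analysis.
Set Implicit Arguments. Unset Strict Implicit. Unset Printing Implicit Defensive.
Import Order.TTheory GRing.Theory Num.Theory.
Import numFieldNormedType.Exports.
Local Open Scope classical_set_scope.
Local Open Scope ring_scope.

(* Vectors of R^n are row vectors 'rV[R]_n; the topology is the standard
   (product) topology of mathcomp-analysis, which agrees with the Euclidean one. *)

Definition enorm {R : realType} {n : nat} (v : 'rV[R]_n) : R :=
  Num.sqrt (\sum_(i < n) v ord0 i ^+ 2).

Definition dom {R : realType} {n : nat} (h : 'rV[R]_n -> \bar R) : set 'rV[R]_n :=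
  [set u | (h u < +oo)%E].

Definition proper_fun {R : realType} {n : nat} (h : 'rV[R]_n -> \bar R) : Prop :=
  (forall u, h u != -oo%E) /\ (exists u, h u < +oo)%E.

Definition lsc_fun {R : realType} {n : nat} (h : 'rV[R]_n -> \bar R) : Prop :=
  forall a : R, closed [set u | (h u <= a%:E)%E].

Definition convex_efun {R : realType} {n : nat} (h : 'rV[R]_n -> \bar R) : Prop :=
  forall (u v : 'rV[R]_n) (t : R), 0 <= t <= 1 ->
    dom h u -> dom h v ->
    (h (t *: u + (1 - t) *: v)%R <= t%:E * h u + (1 - t)%:E * h v)%E.

Definition bounded_eset {R : realType} {n : nat} (S : set 'rV[R]_n) : Prop :=
  exists M : R, forall u, S u -> enorm u <= M.

Definition is_proj {R : realType} {n : nat} (Omega : set 'rV[R]_n)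
  (P : 'rV[R]_n -> 'rV[R]_n) : Prop :=
  forall u, Omega (P u) /\ forall w, Omega w -> enorm (u - P u) <= enorm (u - w).

Definition diam {R : realType} {n : nat} (S : set 'rV[R]_n) : R :=
  sup [set enorm (u1 - u2) | u1 in S & u2 in S].

Fixpoint Aseq {R : realType} (k : nat) : R :=
  match k with
  | 0%N => 12
  | k'.+1 => Aseq k' + (1 + Num.sqrt (1 + 4 * Aseq k')) / 2
  end.

Definition aseq {R : realType} (k : nat) : R :=
  (1 + Num.sqrt (1 + 4 * @Aseq R k)) / 2.

(* Main.v *)
Require Import Defs.
From HB Require Import structures.
From mathcomp Require Import all_boot all_order all_algebra.
From mathcomp Require Import all_classical all_reals all_analysis.
From mathcomp Require Import ring lra.
Import Order.TTheory GRing.Theory Num.Theory.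
Import numFieldNormedType.Exports.
Local Open Scope classical_set_scope.
Local Open Scope ring_scope.

Section Dot.
Context {R : realType} {n : nat}.
Implicit Types u v w : 'rV[R]_n.

Definition dot u v : R := \sum_(i < n) u ord0 i * v ord0 i.
Definition nsq u := dot u u.

Lemma enormE u : enorm u = Num.sqrt (nsq u).
Proof. by rewrite /enorm /nsq /dot; congr Num.sqrt; apply: eq_bigr => i _; rewrite expr2. Qed.

Lemma dotC u v : dot u v = dot v u.
Proof. by apply: eq_bigr => i _; rewrite mulrC. Qed.

Lemma dotDl u v w : dot (u + v) w = dot u w + dot v w.
Proof. by rewrite /dot -big_split; apply: eq_bigr => i _; rewrite mxE mulrDl. Qed.

Lemma dotNl u w : dot (- u) w = - dot u w.
Proof. by rewrite /dot -sumrN; apply: eq_bigr => i _; rewrite mxE mulNr. Qed.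

Lemma dotZl (c : R) u w : dot (c *: u) w = c * dot u w.
Proof. by rewrite /dot mulr_sumr; apply: eq_bigr => i _; rewrite mxE mulrA. Qed.

Lemma dotBl u v w : dot (u - v) w = dot u w - dot v w.
Proof. by rewrite dotDl dotNl. Qed.

Lemma dotDr u v w : dot w (u + v) = dot w u + dot w v.
Proof. by rewrite dotC dotDl !(dotC w). Qed.
Lemma dotBr u v w : dot w (u - v) = dot w u - dot w v.
Proof. by rewrite dotC dotBl !(dotC w). Qed.
Lemma dotZr (c : R) u w : dot w (c *: u) = c * dot w u.
Proof. by rewrite dotC dotZl dotC. Qed.

Lemma nsq_ge0 u : 0 <= nsq u.
Proof. by apply: sumr_ge0 => i _; rewrite -expr2 sqr_ge0. Qed.

Lemma enorm_ge0 u : 0 <= enorm u.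
Proof. exact: sqrtr_ge0. Qed.

Lemma enorm_sq u : enorm u ^+ 2 = nsq u.
Proof. by rewrite enormE sqr_sqrtr // nsq_ge0. Qed.

Lemma quad_aux (a b c : R) : 0 <= a -> 0 <= c ->
  (forall t, 0 <= a - 2 * t * b + t ^+ 2 * c) -> b ^+ 2 <= a * c.
Proof.
move=> a0 c0 H.
have [cz|cp] := eqVneq c 0.
  subst c; have [bz|bn] := eqVneq b 0; first by subst b; rewrite expr0n /= mulr0.
  have := H ((a + 1) / (2 * b)).
  have -> : 2 * ((a + 1) / (2 * b)) * b = a + 1.
    by field; rewrite bn /=; lra.
  lra.
have cpos : 0 < c by rewrite lt_neqAle eq_sym cp c0.
have := H (b / c).
have -> : a - 2 * (b / c) * b + (b / c) ^+ 2 * c = (a * c - b ^+ 2) / c.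
  by field.
by rewrite pmulr_lge0 ?invr_gt0 // subr_ge0.
Qed.

Lemma CS u v : dot u v ^+ 2 <= nsq u * nsq v.
Proof.
apply: quad_aux; rewrite ?nsq_ge0 // => t.
have := nsq_ge0 (u - t *: v).
rewrite /nsq !(dotBl, dotBr, dotZl, dotZr) (dotC v u).
lra.
Qed.

Lemma dot_le u v : dot u v <= enorm u * enorm v.
Proof.
have := CS u v; rewrite -!enorm_sq -exprMn => h.
have p0 := mulr_ge0 (enorm_ge0 u) (enorm_ge0 v).
apply: le_trans (ler_norm _) _.
by rewrite -sqrtr_sqr -(ger0_norm p0) -(sqrtr_sqr (_ * _)) ler_sqrt // sqr_ge0.
Qed.

Lemma enorm_triangle u v : enorm (u + v) <= enorm u + enorm v.
Proof.
rewrite [X in X <= _]enormE.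
rewrite -(ger0_norm (addr_ge0 (enorm_ge0 u) (enorm_ge0 v))) -sqrtr_sqr ler_sqrt; last by rewrite sqr_ge0.
have := dot_le u v; have := enorm_sq u; have := enorm_sq v.
rewrite /nsq !(dotDl, dotDr) (dotC v u) -/(nsq u) -/(nsq v).
move=> h1 h2 h3; rewrite -h1 -h2; nra.
Qed.

Lemma enormZ (c : R) u : enorm (c *: u) = `|c| * enorm u.
Proof.
rewrite !enormE /nsq dotZl dotZr mulrA -expr2 sqrtrM ?sqr_ge0 // sqrtr_sqr //.
Qed.

Lemma enormN u : enorm (- u) = enorm u.
Proof. by rewrite -scaleN1r enormZ normrN normr1 mul1r. Qed.

Lemma nsqBZ u v (t : R) : nsq (u - t *: v) = nsq u - 2 * t * dot u v + t ^+ 2 * nsq v.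
Proof. rewrite /nsq !(dotBl, dotBr, dotZl, dotZr) (dotC v u); ring. Qed.

Lemma nsqD u v : nsq (u + v) = nsq u + 2 * dot u v + nsq v.
Proof. rewrite /nsq !(dotDl, dotDr) (dotC v u); ring. Qed.

End Dot.

Lemma conv_mem (R : realType) (n : nat) (O : set 'rV[R]_n) u v (t : R) :
  convex_set O -> O u -> O v -> 0 <= t -> t <= 1 -> O (t *: u + (1 - t) *: v).
Proof.
move=> cO Ou Ov t0 t1.
have := cO u v (Itv01 t0 t1).
rewrite !inE => /(_ Ou Ov).
by [].
Qed.

Lemma proj_var (R : realType) (n : nat) (O : set 'rV[R]_n) P z w :
  convex_set O -> is_proj O P -> O w -> dot (z - P z) (w - P z) <= 0.
Proof.
move=> cO hP Ow.
set p := P z; set c := dot (z - p) (w - p); set N := nsq (w - p).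
have [Op Hmin] := hP z.
rewrite leNgt; apply/negP => cpos.
have N0 : 0 <= N by exact: nsq_ge0.
suff [t [t0 t1 tN]] : exists t : R, [/\ 0 < t, t <= 1 & t * N < 2 * c].
  have Ot := conv_mem _ _ _ _ _ _ cO Ow Op (ltW t0) t1.
  have := Hmin _ Ot.
  rewrite !enormE ler_sqrt ?nsq_ge0 //.
  have -> : z - (t *: w + (1 - t) *: p) = (z - p) - t *: (w - p).
    rewrite scalerBr scalerBl scale1r !opprD !opprK !addrA; congr (_ + _); rewrite -!addrA; congr (_ + _); rewrite addrC //.
  rewrite nsqBZ -/c -/N -/p => H.
  nra.
have [NL|NG] := leP N c.
  by exists 1; split => //; lra.
exists (c / N); split.
- by rewrite divr_gt0 //; lra.
- by rewrite ler_pdivrMr; lra.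
- by rewrite divfK; [lra | rewrite gt_eqF //; lra].
Qed.

Lemma proj_close (R : realType) (n : nat) (O : set 'rV[R]_n) P z w :
  convex_set O -> is_proj O P -> O w -> enorm (P z - w) <= enorm (z - w).
Proof.
move=> cO hP Ow.
have := proj_var _ _ _ _ z _ cO hP Ow.
rewrite !enormE ler_sqrt ?nsq_ge0 //.
 have -> : nsq (z - w) = nsq (z - P z) + 2 * dot (z - P z) (P z - w) + nsq (P z - w).
  by rewrite -nsqD addrA subrK.
have := nsq_ge0 (z - P z).
have -> : dot (z - P z) (P z - w) = - dot (z - P z) (w - P z).
  by rewrite -[P z - w]opprB dotC dotNl dotC.
lra.
Qed.

Lemma diam_ub (R : realType) (n : nat) (S : set 'rV[R]_n) u1 u2 :
  bounded_eset S -> S u1 -> S u2 -> enorm (u1 - u2) <= diam S.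
Proof.
move=> [M HM] S1 S2.
apply: sup_upper_bound; last by exists u1 => //; exists u2.
split; first by exists (enorm (u1 - u2)); exists u1 => //; exists u2.
exists (M + M) => _ [a Sa [b Sb <-]].
apply: le_trans (enorm_triangle _ _) _.
by rewrite enormN lerD // HM.
Qed.

Section Seq.
Context {R : realType}.

Lemma Aseq_ge0 k : 0 <= @Aseq R k.
Proof.
elim: k => [|k IH] /=; first by [].
apply: addr_ge0 => //; apply: divr_ge0 => //.
Qed.

Lemma aseq_sq k : @aseq R k ^+ 2 = aseq k + Aseq k.
Proof.
rewrite /aseq.
have h := sqr_sqrtr (a := 1 + 4 * @Aseq R k) ltac:(have := Aseq_ge0 k; lra).
set s := Num.sqrt _ in h *.
have -> : ((1 + s) / 2) ^+ 2 = (1 + 2 * s + s ^+ 2) / 4 by field.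
rewrite h; field.
by []. Qed.

Lemma aseq_ge1 k : 1 <= @aseq R k.
Proof.
rewrite /aseq.
have h := sqr_sqrtr (a := 1 + 4 * @Aseq R k) ltac:(have := Aseq_ge0 k; lra).
have s0 := sqrtr_ge0 (1 + 4 * @Aseq R k).
set s := Num.sqrt _ in h s0 *.
have A0 := Aseq_ge0 k.
have : 1 <= s by nra.
lra.
Qed.

Lemma AseqS k : @Aseq R k.+1 = Aseq k + aseq k.
Proof. by []. Qed.

Lemma Aseq_bound k : @Aseq R k <= (k%:R + 4) ^+ 2.
Proof.
elim: k => [|k IH]; first by rewrite /=; lra.
rewrite AseqS.
have := aseq_sq k; have := aseq_ge1 k.
have k0 : 0 <= k%:R :> R by [].
rewrite -natr1.
nra.
Qed.

Lemma aseq_bound k : @aseq R k <= 4 * k.+1%:R.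
Proof.
have := aseq_sq k; have := aseq_ge1 k; have := Aseq_bound k.
case: k => [|k] /=.
  rewrite /= mulr1 add0r; nra.
rewrite -!natr1.
have k0 : 0 <= k%:R :> R by [].
nra.
Qed.

End Seq.

Theorem lemma4p4 (R : realType) (n : nat)
  (h : 'rV[R]_n -> \bar R) (Omega : set 'rV[R]_n) (P : 'rV[R]_n -> 'rV[R]_n)
  (lambda0 xibar : R) (y x : nat -> 'rV[R]_n) (lambda xi : nat -> R) :
  proper_fun h -> lsc_fun h -> convex_efun h ->
  closed (dom h) -> bounded_eset (dom h) ->
  closed Omega -> convex_set Omega -> dom h `<=` Omega ->
  is_proj Omega P ->
  0 < lambda0 -> 0 <= xibar ->
  (forall k, dom h (y k)) ->
  (forall k, (1 <= k)%N -> 0 < lambda k <= lambda0) ->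
  (forall k, (1 <= k)%N -> 0 <= xi k <= xibar) ->
  x 0%N = y 0%N ->
  (forall k, (1 <= k)%N ->
     let tau := 2 * xi k * lambda k / aseq k.-1 in
     x k = P (((1 + tau) * Aseq k / (aseq k.-1 * (tau * aseq k.-1 + 1))) *: y k
              - (Aseq k.-1 / (aseq k.-1 * (tau * aseq k.-1 + 1))) *: y k.-1)) ->
  forall k : nat,
    enorm (x k - x 0%N) <= 2 * (2 + xibar * lambda0) * diam (dom h) * k%:R.
Proof.
move=> _ _ _ _ bd _ cO sub hP l0 xb0 ydom hl hxi x0 hx k.
have D0 : 0 <= diam (dom h).
  by apply: le_trans (diam_ub _ _ _ _ _ bd (ydom 0%N) (ydom 0%N)); exact: enorm_ge0.
case: k => [|k].
  rewrite subrr mulr0 -(scale0r (0 : 'rV[R]_n)) enormZ normr0 mul0r //.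
have := hx k.+1 isT; rewrite /= => ->.
have [lp _] := andP (hl k.+1 isT).
have [xp _] := andP (hxi k.+1 isT).
set a := aseq k.
set t := 2 * xi k.+1 * lambda k.+1 / a.
have a1 : 1 <= a by exact: aseq_ge1.
have asq : a ^+ 2 = a + Aseq k by exact: aseq_sq.
have t0 : 0 <= t.
  by rewrite /t divr_ge0 ?mulr_ge0 //; lra.
have ta0 : 0 < t * a + 1 by have := mulr_ge0 t0 (ltW (lt_le_trans ltr01 a1)); lra.
set b := Aseq k / (a * (t * a + 1)).
have hab : (1 + t) * Aseq k.+1 / (a * (t * a + 1)) = 1 + b.
  rewrite /b AseqS -/a.
  have -> : Aseq k = a ^+ 2 - a by rewrite asq; ring.
  field; apply/andP; split; rewrite gt_eqF //; lra.
have b0 : 0 <= b.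
  by rewrite /b divr_ge0 ?Aseq_ge0 // mulr_ge0 //; lra.
have ba : 1 + b <= a.
  have -> : b = (a - 1) / (t * a + 1).
    rewrite /b; have -> : Aseq k = a ^+ 2 - a by rewrite asq; ring.
    field; apply/andP; split; rewrite gt_eqF //; lra.
  suff : (a - 1) / (t * a + 1) <= a - 1 by lra.
  rewrite ler_pdivrMr //.
  have : 0 <= (a - 1) * (t * a) by apply: mulr_ge0; [lra | apply: mulr_ge0; lra].
  lra.
rewrite hab x0.
set z := (1 + b) *: y k.+1 - b *: y k.
have ez : z - y 0%N = (y k.+1 - y 0%N) + b *: (y k.+1 - y k).
  rewrite /z scalerDl scale1r scalerBr addrAC [y k.+1 + _ - _]addrAC !addrA //.
apply: le_trans (proj_close _ _ _ _ z _ cO hP (sub _ (ydom 0%N))) _.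
rewrite ez.
apply: le_trans (enorm_triangle _ _) _.
rewrite enormZ ger0_norm //.
have d1 := diam_ub _ _ _ _ _ bd (ydom k.+1) (ydom 0%N).
have d2 := diam_ub _ _ _ _ _ bd (ydom k.+1) (ydom k).
have ak := aseq_bound (R:=R) k; rewrite -/a in ak.
have e2 := enorm_ge0 (y k.+1 - y k).
have : b * enorm (y k.+1 - y k) <= b * diam (dom h) by rewrite ler_wpM2l.
have xl : 0 <= xibar * lambda0 by apply: mulr_ge0; lra.
have kk : 0 <= k.+1%:R :> R by [].
set D := diam (dom h) in D0 d1 d2 *.
set K := k.+1%:R in ak kk *.
have h1 : (1 + b) * D <= a * D by rewrite ler_wpM2r.
have h2 : a * D <= 4 * K * D by rewrite ler_wpM2r // mulrC.
have h3 : 0 <= xibar * lambda0 * D * K by rewrite mulr_ge0 // mulr_ge0.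
have -> : 2 * (2 + xibar * lambda0) * D * K = 4 * K * D + 2 * (xibar * lambda0 * D * K) by ring.
lra.
Qed.
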